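(* Let $A$ and $B$ be Young functions such that $B \ll A$ near infinity. Then there exists a Young function $C$ such that $B \ll C$ and $C \ll A$ near infinity.
   Context: A Young function is a convex function $A:[0,\infty)\to[0,\infty]$ with $A(0)=0$ which is neither identically $0$ nor identically $+\infty$. For Young functions $A,B$, one says that $B$ increases essentially more slowly than $A$ near infinity, written $B\ll A$, if $B$ is finite valued and $\lim_{t\to\infty} B(\lambda t)/A(t)=0$ for every $\lambda>0$. *)

(* Defs.v *)
From HB Require Import structures.
From mathcomp Require Import all_boot all_order all_algebra.
From mathcomp Require Import all_classical all_reals all_analysis.
Set Implicit Arguments. Unset Strict Implicit. Unset Printing Implicit Defensive.
Import Order.TTheory GRing.Theory Num.Theory.
Import numFieldNormedType.Exports.
Local Open Scope classical_set_scope.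
Local Open Scope ring_scope.
Local Open Scope ereal_scope.

(* A Young function: convex A : [0,oo) -> [0,oo] with A 0 = 0, neither
   identically 0 nor identically +oo on [0,oo).  Values of A at negative
   arguments are irrelevant. *)
Definition young_function (R : realType) (A : R -> \bar R) : Prop :=
  [/\ (forall t : R, (0 <= t)%R -> 0 <= A t),
      A 0%R = 0,
      (forall (x y l : R), (0 <= x)%R -> (0 <= y)%R -> (0 < l < 1)%R ->
          A (l * x + (1 - l) * y)%R <= l%:E * A x + (1 - l)%:E * A y),
      (exists t : R, (0 <= t)%R /\ A t != 0) &
      (exists t : R, (0 <= t)%R /\ A t != +oo)].

(* B increases essentially more slowly than A near infinity (B << A):
   B is finite valued and B(l t)/A(t) -> 0 as t -> +oo for every l > 0
   (division in the extended reals, with r/+oo = 0). *)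
Definition ess_slower (R : realType) (B A : R -> \bar R) : Prop :=
  (forall t : R, (0 <= t)%R -> B t \is a fin_num) /\
  (forall l : R, (0 < l)%R -> B (l * t)%R / A t @[t --> +oo%R] --> 0).

(* Main.v *)
Require Import Defs.
From HB Require Import structures.
From mathcomp Require Import all_boot all_order all_algebra.
From mathcomp Require Import all_classical all_reals all_analysis.
From mathcomp Require Import ring lra.
Set Implicit Arguments. Unset Strict Implicit. Unset Printing Implicit Defensive.
Import Order.TTheory GRing.Theory Num.Theory.
Import numFieldNormedType.Exports.
Local Open Scope classical_set_scope.
Local Open Scope ring_scope.
Section S.
Variable R : realType.
Implicit Types b : R -> R.

Definition cvxr b := forall x y l : R, 0 <= x -> 0 <= y -> 0 < l < 1 ->
  b (l * x + (1 - l) * y) <= l * b x + (1 - l) * b y.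

Lemma ratio_mono b : b 0 = 0 -> (forall t : R, 0 <= t -> 0 <= b t) -> cvxr b ->
  forall x y : R, 0 <= x -> x <= y -> 0 < y -> b x * y <= x * b y.
Proof.
move=> b0 bge cb x y x0 xy y0.
have [->|xn0] := eqVneq x 0; first by rewrite b0 !mul0r.
have [->|xny] := eqVneq x y; first by rewrite mulrC.
have xp : 0 < x by rewrite lt_neqAle eq_sym xn0.
have xly : x < y by rewrite lt_neqAle xny.
have l01 : 0 < x / y < 1.
  by rewrite divr_gt0 //= ltr_pdivrMr // mul1r.
have := cb y 0 (x / y) (ltW y0) (lexx _) l01.
rewrite b0 !mulr0 addr0 divfK ?gt_eqF // => h.
have := ler_wpM2r (ltW y0) h.
  move=> h2; apply: le_trans h2 _; rewrite addr0 mulrAC divfK ?gt_eqF // mulrC.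
Qed.

Lemma mono b : b 0 = 0 -> (forall t : R, 0 <= t -> 0 <= b t) -> cvxr b ->
  forall x y : R, 0 <= x -> x <= y -> b x <= b y.
Proof.
move=> b0 bge cb x y x0 xy.
have [y0|yp] := eqVneq y 0; first by move: xy; rewrite y0 => xy0; have -> : x = 0 by apply/eqP; rewrite eq_le x0 xy0.
have ypos : 0 < y by rewrite lt_neqAle eq_sym yp (le_trans x0 xy).
have h := ratio_mono b0 bge cb x0 xy ypos.
have : b x * y <= b y * y.
  apply: (le_trans h); rewrite mulrC; apply: ler_wpM2l => //.
  exact: bge (ltW ypos).
by rewrite ler_pM2r.
Qed.

Lemma grow b : b 0 = 0 -> (forall t : R, 0 <= t -> 0 <= b t) -> cvxr b ->
  (exists t0 : R, 0 <= t0 /\ b t0 != 0) ->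
  forall M : R, exists S : R, 0 < S /\ forall s : R, S <= s -> M <= b s.
Proof.
move=> b0 bge cb [t0 [t00 bt0]].
have t0p : 0 < t0.
  rewrite lt_neqAle t00 andbT; apply: contraNneq bt0 => <-; exact/eqP.
have bp : 0 < b t0 by rewrite lt_neqAle eq_sym bt0 bge.
move=> M; exists (Num.max t0 (M * t0 / b t0)).
split; first by rewrite lt_max t0p.
move=> s; rewrite ge_max => /andP[ts Ms].
have s0 : 0 < s by apply: lt_le_trans ts.
have h := ratio_mono b0 bge cb t00 ts s0.
have h2 : M * t0 <= s * b t0 by move: Ms; rewrite ler_pdivrMr.
have : M * t0 <= t0 * b s by apply: le_trans h2 _; rewrite mulrC.
by rewrite mulrC ler_pM2l.
Qed.
End S.
Section S2.
Variable R : realType.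

Lemma cvg0P (u : R -> \bar R) :
  (forall e : R, 0 < e -> \forall t \near +oo, (0 <= u t <= e%:E)%E) ->
  (u t @[t --> +oo] --> 0%E).
Proof.
move=> h; apply/fine_cvgP; split.
  apply: filterS (h 1 ltr01) => t /andP[a b].
  by move: a b; case: (u t).
apply/cvgrPdist_le => e e0.
apply: filterS (h e e0) => t /=.
case: (u t) => [r|/andP[_ ]|] //= /andP[a b].
have a2 : 0 <= r by rewrite -lee_fin.
have b2 : r <= e by rewrite -lee_fin.
  by rewrite sub0r normrN ger0_norm.
Qed.

Lemma cvg0_le (u : R -> \bar R) :
  (u t @[t --> +oo] --> 0%E) ->
  forall e : R, 0 < e -> \forall t \near +oo, (u t <= e%:E)%E.
Proof.
move/fine_cvgP => [fin cv] e e0.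
move/cvgrPdist_le: cv => /(_ e e0) cv.
apply: filterS2 fin cv => t /=.
case: (u t) => [r||] //= _; rewrite sub0r normrN lee_fin => h.
exact: le_trans (ler_norm r) h.
Qed.

Lemma ratio_fin (x r e : R) : 0 < r -> ((x%:E / r%:E <= e%:E)%E = (x <= e * r)).
Proof. by move=> r0; rewrite inver gt_eqF // -EFinM lee_fin ler_pdivrMr. Qed.

Lemma ratio_0 (x : R) : 0 < x -> (x%:E / 0 = +oo)%E.
Proof. by move=> x0; rewrite inve0 gt0_muley ?lte_fin. Qed.

Lemma ratio_y (x : R) : (x%:E / +oo = 0)%E.
Proof. by rewrite invey mule0. Qed.
End S2.

Lemma natbig (R : realType) (x : R) : exists n : nat, (0 < n)%N /\ x <= n%:R.
Proof.
exists (Num.Def.archi_bound (Num.max 0 x)).+1; split => //.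
have h0 : 0 <= Num.max 0 x by rewrite le_max lexx.
have hx : x <= Num.max 0 x by rewrite le_max lexx orbT.
have h := archi_boundP h0.
apply: (le_trans hx); apply: ltW; apply: (lt_le_trans h).
by rewrite ler_nat.
Qed.

Lemma ratio_ge0 (R : realType) (x r : R) : 0 <= x -> 0 < r -> (0 <= x%:E / r%:E)%E.
Proof. by move=> x0 r0; rewrite inver gt_eqF // -EFinM lee_fin divr_ge0 // ltW. Qed.

Theorem proposition2p6 (R : realType) (A B : R -> \bar R) :
  young_function A -> young_function B -> ess_slower B A ->
  exists C : R -> \bar R,
    young_function C /\ ess_slower B C /\ ess_slower C A.
Proof.
move=> [A0 A00 Acvx [ta [ta0 Ata]] _] [B0 B00 Bcvx [tb [tb0 Btb]] _] [Bfin BA].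
pose b t := fine (B t).
have BE : forall t : R, 0 <= t -> B t = (b t)%:E by move=> t t0; rewrite /b fineK // Bfin.
have b0 : b 0 = 0 by rewrite /b B00.
have bge : forall t : R, 0 <= t -> 0 <= b t by move=> t t0; rewrite -lee_fin -BE // B0.
have cb : cvxr b.
  move=> x y l x0 y0 /andP[l0 l1].
  have z0 : 0 <= l * x + (1 - l) * y.
    by rewrite addr_ge0 // mulr_ge0 // ?subr_ge0 ltW.
  rewrite -lee_fin EFinD !EFinM -!BE //; apply: Bcvx => //; exact/andP.
have bmono := mono b0 bge cb.
have bratio := ratio_mono b0 bge cb.
have btb : b tb != 0 by move: Btb; rewrite BE // eqe.
have bgrow := grow b0 bge cb (ex_intro _ tb (conj tb0 btb)).
have hT : forall k : nat, exists T : R, 1 <= T /\ (forall s, T <= s ->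
    (B (k%:R ^+ 2 * s)%R / A s <= ((k%:R)^-1)%R%:E)%E).
  case=> [|k].
    exists 1; split => // s _.
    by rewrite expr0n /= mul0r B00 mul0e invr0.
  have kp : 0 < (k.+1)%:R ^+ 2 :> R by rewrite exprn_gt0.
  have kinv : 0 < (k.+1)%:R^-1 :> R by rewrite invr_gt0 ltr0n.
  have [M [Mr HM]] := cvg0_le (BA _ kp) kinv.
  exists (Num.max 1 (M + 1)); split; first by rewrite le_max lexx.
  move=> s; rewrite ge_max => /andP[_ hs]; apply: HM.
  by apply: lt_le_trans hs; rewrite ltrDl.
have [T HT] := choice hT.
have T1 : forall k, 1 <= T k by move=> k; case: (HT k).
have T0 : forall k, 0 <= T k by move=> k; apply: le_trans (T1 k).
pose d k := b (k%:R ^+ 2 * T k).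
have d0 : forall k, 0 <= d k by move=> k; apply: bge; rewrite mulr_ge0 // exprn_ge0.
pose f k t := Num.max 0 (b (k%:R * t) - d k).
have f0 : forall k t, 0 <= f k t by move=> k t; rewrite le_max lexx.
have fle : forall k t, 0 <= t -> f k t <= b (k%:R * t).
  by move=> j t t0; rewrite ge_max bge ?mulr_ge0 //= gerBl.
have fsmall : forall k t, 0 <= t -> k%:R * t <= k%:R ^+ 2 * T k -> f k t = 0.
  move=> k t t0 h; apply/eqP; rewrite eq_le f0 andbT ge_max lexx /= subr_le0.
  by apply: bmono => //; rewrite mulr_ge0.
have fbound : forall k t, 0 <= t -> f k t <= b (t * t).
  move=> k t t0; have [kt|tk] := lerP (k%:R) t.
    apply: le_trans (fle k t t0) _; apply: bmono; first by rewrite mulr_ge0.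
    by rewrite ler_wpM2r.
  rewrite fsmall //; first by rewrite bge // mulr_ge0.
  apply: (@le_trans _ _ (k%:R * k%:R)); first by rewrite ler_wpM2l // ltW.
  by rewrite expr2 ler_peMr ?mulr_ge0.
pose c t := sup (range (fun k => f k t)).
have c_ub : forall k t, 0 <= t -> f k t <= c t.
  move=> k t t0; apply: ub_le_sup; last by exists k.
  by exists (b (t * t)) => _ [j _ <-]; exact: fbound.
have c_le : forall t x, 0 <= t -> (forall k, f k t <= x) -> c t <= x.
  move=> t x t0 h; apply: ge_sup; first by exists (f 0%N t), 0%N.
  by move=> _ [j _ <-].
have c_ge0 : forall t, 0 <= t -> 0 <= c t.
  by move=> t t0; apply: le_trans (c_ub 0%N t t0).
have c0 : c 0 = 0.
  apply/eqP; rewrite eq_le c_ge0 // andbT; apply: c_le => // k.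
  by rewrite /f mulr0 b0 sub0r ge_max lexx /= oppr_le0.
exists (fun t => (c t)%:E); split; [|split].
- split.
  + by move=> t t0; rewrite lee_fin c_ge0.
  + by rewrite c0.
  + move=> x y l x0 y0 /andP[l0 l1].
    have z0 : 0 <= l * x + (1 - l) * y.
      by rewrite addr_ge0 // mulr_ge0 // ?subr_ge0 ltW.
    rewrite -!EFinM -EFinD lee_fin; apply: c_le => // k.
    rewrite ge_max; apply/andP; split.
      by rewrite addr_ge0 // mulr_ge0 ?c_ge0 // ?subr_ge0 ltW.
    have kx : 0 <= k%:R * x by rewrite mulr_ge0.
    have ky : 0 <= k%:R * y by rewrite mulr_ge0.
    have hc := cb _ _ l kx ky (introT andP (conj l0 l1)).
    have -> : k%:R * (l * x + (1 - l) * y) = l * (k%:R * x) + (1 - l) * (k%:R * y).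
      by ring.
    have h1 : b (k%:R * x) - d k <= c x.
      by apply: le_trans (c_ub k x x0); rewrite le_max lexx orbT.
    have h2 : b (k%:R * y) - d k <= c y.
      by apply: le_trans (c_ub k y y0); rewrite le_max lexx orbT.
    have h1' := ler_wpM2l (ltW l0) h1.
    have l1p : 0 <= 1 - l by rewrite subr_ge0 ltW.
    have h2' := ler_wpM2l l1p h2.
    lra.
  + have [S [S0 HS]] := bgrow (d 1%N + 1).
    exists S; split; first exact: ltW.
    apply/negP; rewrite eqe => /eqP cS.
    have hf : b (1%:R * S) - d 1%N <= f 1%N S by rewrite /f le_max lexx orbT.
    have h3 := HS S (lexx _); have h4 := c_ub 1%N S (ltW S0).
    rewrite mul1r in hf.
    have h5 := le_trans hf h4; rewrite cS in h5.
    move: h3 h5; clear; move=> h3 h5; exfalso; lra.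
  + by exists 0; split.
- split; first exact: Bfin.
  move=> l l0; apply: cvg0P => e e0.
  have [k [k0 hk]] := natbig (Num.max l (2 * l / e)).
  move: hk; rewrite ge_max => /andP[lk lke].
  have kp : 0 < k%:R :> R by rewrite ltr0n.
  have [S [S0 HS]] := bgrow (2 * d k + 1).
  exists (Num.max 1 (S / k%:R)); split; first exact: num_real.
  move=> t; rewrite gt_max => /andP[t1 tS].
  have tp : 0 < t by apply: lt_trans t1.
  have t0 : 0 <= t by apply: ltW.
  have kt : S <= k%:R * t by move: tS; rewrite ltr_pdivrMr // mulrC => /ltW.
  have hb := HS _ kt.
  have hf : b (k%:R * t) - d k <= c t.
    by apply: le_trans (c_ub k t t0); rewrite /f le_max lexx orbT.
  have dk := d0 k.
  have ct0 : 0 < c t by lra.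
  have lt0 : 0 <= l * t by rewrite mulr_ge0 // ltW.
  rewrite BE // ratio_ge0 ?bge //= ratio_fin //.
  have hr := bratio (l * t) (k%:R * t) lt0 (ler_wpM2r t0 lk) (mulr_gt0 kp tp).
  have e1 : b (k%:R * t) <= 2 * c t by lra.
  have s1 : b (l * t) * (k%:R * t) <= (l * t) * (2 * c t).
    exact: le_trans hr (ler_wpM2l lt0 e1).
  have e2 : 2 * l <= e * k%:R by move: lke; rewrite ler_pdivrMr // [k%:R * e]mulrC.
  have s2 : (l * t) * (2 * c t) <= (e * c t) * (k%:R * t).
    rewrite (_ : (l * t) * (2 * c t) = (2 * l) * (t * c t)); last by ring.
    rewrite (_ : (e * c t) * (k%:R * t) = (e * k%:R) * (t * c t)); last by ring.
    by apply: ler_wpM2r => //; rewrite mulr_ge0 // ltW.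
  rewrite -(ler_pM2r (mulr_gt0 kp tp)); exact: le_trans s1 s2.
- split; first by [].
  move=> l l0; apply: cvg0P => e e0.
  have [K [K0 hK]] := natbig (Num.max l e^-1).
  move: hK; rewrite ge_max => /andP[lK eK].
  have Kp : 0 < K%:R :> R by rewrite ltr0n.
  have Klp : 0 < K%:R * l by rewrite mulr_gt0.
  have H1 := cvg0_le (BA _ Klp) e0.
  have [S [S0 HS]] := bgrow 1.
  have H2 : \forall t \near +oo, 1 <= t /\ S <= K%:R * l * t.
    exists (Num.max 1 (S / (K%:R * l))); split; first exact: num_real.
    move=> t; rewrite gt_max => /andP[t1 tS]; split; first exact: ltW.
    by move: tS; rewrite ltr_pdivrMr // mulrC => /ltW.
  apply: filterS2 H1 H2 => t h1 [t1 tS].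
  have t0 : 0 <= t by apply: le_trans t1.
  have bK := HS _ tS.
  have Klt0 : 0 <= K%:R * l * t by rewrite mulr_ge0 // ltW.
  have lt0 : 0 <= l * t by rewrite mulr_ge0 // ltW.
  move: h1; rewrite BE //.
  have := A0 t t0.
  case Aeq : (A t) => [a| |] a0 h1; last by [].
    have [az|an] := eqVneq a 0.
      by move: h1; rewrite az ratio_0 // (lt_le_trans ltr01 bK).
    have ap : 0 < a by rewrite lt_neqAle eq_sym an -lee_fin.
    rewrite ratio_fin // in h1.
    rewrite ratio_ge0 ?c_ge0 //= ratio_fin //.
    apply: c_le => // k.
    have [kK|Kk] := leqP k K.
      apply: le_trans (fle k _ lt0) _.
      apply: le_trans h1; apply: bmono; first by rewrite mulr_ge0.
      rewrite mulrA; apply: ler_wpM2r => //; apply: ler_wpM2r; first exact: ltW.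
      by rewrite ler_nat.
    have kp : 0 < k%:R :> R by rewrite ltr0n (leq_ltn_trans _ Kk).
    have [sm|bg] := lerP (k%:R * (l * t)) (k%:R ^+ 2 * T k).
      by rewrite fsmall // mulr_ge0 // ltW.
    have lk : l <= k%:R by apply: le_trans lK _; rewrite ler_nat ltnW.
    have klt : k%:R * (l * t) <= k%:R ^+ 2 * t.
      by rewrite expr2 -mulrA ler_pM2l //; apply: ler_wpM2r.
    have Tt : T k <= t.
      by have := lt_le_trans bg klt; rewrite ltr_pM2l ?exprn_gt0 // => /ltW.
    have h3 := (HT k).2 t Tt.
    have k2t : 0 <= k%:R ^+ 2 * t by rewrite mulr_ge0 // exprn_ge0 // ltW.
    rewrite BE // Aeq ratio_fin // in h3.
    apply: le_trans (fle k _ lt0) _.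
    apply: le_trans (bmono _ _ _ klt) _; first by rewrite mulr_ge0 // ltW.
    apply: le_trans h3 _; apply: ler_wpM2r; first exact: ltW.
    rewrite invf_ple //; apply: le_trans eK _; rewrite ler_nat ltnW //.
  by rewrite ratio_y lexx lee_fin ltW.
Qed.
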